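(* Let $(E,\mu)$ and $(F,\nu)$ be fuzzy Riesz spaces and $T:E\rightarrow F$ a fuzzy Riesz homomorphism. Then the image under $T$ of a fuzzy projection band in $E$ is a fuzzy projection band in $T(E)$.
   Context: A fuzzy order on a real vector space $E$ is a map $\mu:E\times E\to[0,1]$ with $\mu(x,x)=1$; $\mu(x,y)+\mu(y,x)>1$ implies $x=y$; and $\mu(x,z)\ge\sup_{y}\min(\mu(x,y),\mu(y,z))$. Write $x\le y$ for $\mu(x,y)>\frac12$; suprema/infima are taken with respect to this relation. $(E,\mu)$ is a fuzzy ordered linear space if $\mu(x_1,x_2)>\frac12$ implies $\mu(x_1,x_2)\le\mu(x_1+x,x_2+x)$ for all $x$ and $\mu(x_1,x_2)\le\mu(\alpha x_1,\alpha x_2)$ for all $\alpha>0$; it is a fuzzy Riesz space if $x\vee y=\sup\{x,y\}$ and $x\wedge y=\inf\{x,y\}$ exist for all $x,y$. $|x|=x\vee(-x)$. A fuzzy ideal is a vector subspace $A$ such that $\mu(|x|,|y|)>\frac12$ and $y\in A$ imply $x\in A$. A fuzzy band is a fuzzy ideal $B$ such that whenever $D\subseteq B$ and $\sup D$ exists in the space, $\sup D\in B$. $x\perp y$ means $|x|\wedge|y|=0$, and $B^d=\{x: x\perp y\ \forall y\in B\}$. A fuzzy projection band is a fuzzy band $B$ with $E=B\oplus B^d$. A fuzzy Riesz homomorphism is a linear map with $T(x\vee y)=Tx\vee Ty$; $T(E)$ is a fuzzy Riesz subspace of $F$ regarded as a fuzzy Riesz space with the restricted order. *)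

(* Defs.v *)
From HB Require Import structures.
From mathcomp Require Import all_boot all_order all_algebra.
From mathcomp Require Import reals.
Set Implicit Arguments. Unset Strict Implicit. Unset Printing Implicit Defensive.
Import Order.TTheory GRing.Theory Num.Theory.
Local Open Scope ring_scope.

Section FuzzyOrder.
Variables (R : realType) (E : Type) (mu : E -> E -> R).

(* A fuzzy order: values in [0,1], reflexive, antisymmetric,
   and sup_y min(mu x y, mu y z) <= mu x z (unfolded as a bound for every y). *)
Definition fuzzy_order : Prop :=
  [/\ (forall x y, 0 <= mu x y <= 1),
      (forall x, mu x x = 1),
      (forall x y, 1 < mu x y + mu y x -> x = y) &
      (forall x y z, Num.min (mu x y) (mu y z) <= mu x z)].

Definition fle (x y : E) : Prop := 2^-1 < mu x y.

(* Sets are predicates E -> Prop; S is the ambient space where bounds are taken. *)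
Definition fullset : E -> Prop := fun _ => True.
Definition pair (x y : E) : E -> Prop := fun z => z = x \/ z = y.

Definition is_ub_in (S D : E -> Prop) (u : E) : Prop :=
  S u /\ forall d, D d -> fle d u.
Definition is_lb_in (S D : E -> Prop) (l : E) : Prop :=
  S l /\ forall d, D d -> fle l d.
Definition is_sup_in (S D : E -> Prop) (s : E) : Prop :=
  is_ub_in S D s /\ forall u, is_ub_in S D u -> fle s u.
Definition is_inf_in (S D : E -> Prop) (i : E) : Prop :=
  is_lb_in S D i /\ forall l, is_lb_in S D l -> fle l i.

End FuzzyOrder.

Section FuzzyRiesz.
Variables (R : realType) (E : lmodType R) (mu : E -> E -> R).

Definition fuzzy_ordered_linear : Prop :=
  [/\ fuzzy_order mu,
      (forall x1 x2 x, fle mu x1 x2 -> mu x1 x2 <= mu (x1 + x) (x2 + x)) &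
      (forall x1 x2 (a : R), fle mu x1 x2 -> 0 < a ->
         mu x1 x2 <= mu (a *: x1) (a *: x2))].

Definition fuzzy_riesz : Prop :=
  fuzzy_ordered_linear /\
  forall x y, (exists s, is_sup_in mu (@fullset E) (pair x y) s) /\
              (exists i, is_inf_in mu (@fullset E) (pair x y) i).

Variable S : E -> Prop.

Definition is_abs_in (x a : E) : Prop := is_sup_in mu S (pair x (- x)) a.

Definition perp_in (x y : E) : Prop :=
  exists a b, [/\ is_abs_in x a, is_abs_in y b & is_inf_in mu S (pair a b) 0].

Definition subspace_in (A : E -> Prop) : Prop :=
  [/\ (forall x, A x -> S x), A 0,
      (forall x y, A x -> A y -> A (x + y)) &
      (forall (c : R) x, A x -> A (c *: x))].

Definition fuzzy_ideal_in (A : E -> Prop) : Prop :=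
  subspace_in A /\
  forall x y a b, S x -> S y -> is_abs_in x a -> is_abs_in y b ->
    fle mu a b -> A y -> A x.

Definition fuzzy_band_in (B : E -> Prop) : Prop :=
  fuzzy_ideal_in B /\
  forall (D : E -> Prop) s, (forall d, D d -> B d) -> is_sup_in mu S D s -> B s.

Definition disj_compl_in (B : E -> Prop) : E -> Prop :=
  fun x => S x /\ forall y, B y -> perp_in x y.

Definition fuzzy_proj_band_in (B : E -> Prop) : Prop :=
  [/\ fuzzy_band_in B,
      (forall x, S x -> exists b c, [/\ B b, disj_compl_in B c & x = b + c]) &
      (forall x, B x -> disj_compl_in B x -> x = 0)].

End FuzzyRiesz.

Definition img_set (A B : Type) (f : A -> B) (P : A -> Prop) : B -> Prop :=
  fun y => exists x, P x /\ y = f x.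

Definition fuzzy_riesz_hom (R : realType) (E F : lmodType R)
  (mu : E -> E -> R) (nu : F -> F -> R) (T : {linear E -> F}) : Prop :=
  forall x y s, is_sup_in mu (@fullset E) (pair x y) s ->
    is_sup_in nu (@fullset F) (pair (T x) (T y)) (T s).

(* Main.v *)
Require Import Defs.
From HB Require Import structures.
From mathcomp Require Import all_boot all_order all_algebra.
From mathcomp Require Import reals.
From mathcomp Require Import lra.
From Stdlib Require Import ClassicalEpsilon Classical.
Import Order.TTheory GRing.Theory Num.Theory.
Local Open Scope ring_scope.
Set Implicit Arguments. Unset Strict Implicit. Unset Printing Implicit Defensive.

Section Riesz.
Variables (R : realType) (V : lmodType R) (mu : V -> V -> R).
Hypothesis Hr : fuzzy_riesz mu.

Local Notation le := (fle mu).

Lemma le_refl x : le x x.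
Proof.
case: Hr => [[[_ Hx _ _] _ _] _]; rewrite /fle Hx; lra.
Qed.

Lemma le_trans x y z : le x y -> le y z -> le x z.
Proof.
case: Hr => [[[_ _ _ Ht] _ _] _]; rewrite /fle => h1 h2.
apply: lt_le_trans (Ht x y z); by rewrite lt_min h1 h2.
Qed.

Lemma le_anti x y : le x y -> le y x -> x = y.
Proof.
case: Hr => [[[_ _ Ha _] _ _] _]; rewrite /fle => h1 h2.
apply: Ha; lra.
Qed.

Lemma le_add x y z : le x y -> le (x + z) (y + z).
Proof.
case: Hr => [[_ Hd _] _]; rewrite /fle => h.
by apply: lt_le_trans (Hd _ _ z h).
Qed.

Lemma le_scale x y (a : R) : le x y -> 0 < a -> le (a *: x) (a *: y).
Proof.
case: Hr => [[_ _ Hs] _]; rewrite /fle => h ha.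
by apply: lt_le_trans (Hs _ _ a h ha).
Qed.

Lemma le_eq a b a' b' : a = a' -> b = b' -> le a b -> le a' b'.
Proof. by move=> -> ->. Qed.

Lemma le_subr x y z : le (x + z) (y + z) -> le x y.
Proof.
move=> h; have := le_add (- z) h; apply: le_eq; by rewrite addrK.
Qed.

Lemma le_opp x y : le x y -> le (- y) (- x).
Proof.
move=> h; have := le_add (- x - y) h; apply: le_eq.
  by rewrite addrA subrr add0r.
by rewrite addrC addrNK.
Qed.

Lemma le_add2 a b c d : le a b -> le c d -> le (a + c) (b + d).
Proof.
move=> h1 h2; apply: (le_trans (le_add c h1)).
rewrite (addrC b c) (addrC b d); exact: le_add.
Qed.

Lemma le_sub0 x y : le x y -> le 0 (y - x).
Proof. move=> h; have := le_add (- x) h; apply: le_eq => //; by rewrite subrr. Qed.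

Lemma le_0sub x y : le 0 (y - x) -> le x y.
Proof. move=> h; have := le_add x h; apply: le_eq; by rewrite ?add0r ?subrK. Qed.

Definition J (x y : V) : V :=
  proj1_sig (constructive_indefinite_description _ (proj1 (proj2 Hr x y))).

Lemma JP x y : is_sup_in mu (@fullset V) (pair x y) (J x y).
Proof. exact: proj2_sig (constructive_indefinite_description _ (proj1 (proj2 Hr x y))). Qed.

Lemma le_J1 x y : le x (J x y).
Proof. case: (JP x y) => [[_ h] _]; apply: h; by left. Qed.

Lemma le_J2 x y : le y (J x y).
Proof. case: (JP x y) => [[_ h] _]; apply: h; by right. Qed.

Lemma J_lub x y z : le x z -> le y z -> le (J x y) z.
Proof.
move=> h1 h2; case: (JP x y) => [_ h]; apply: h; split => // d [->|->] //.
Qed.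

Lemma sup_uniq x y s : is_sup_in mu (@fullset V) (pair x y) s -> s = J x y.
Proof.
move=> [[_ hu] hl]; apply: le_anti.
  apply: hl; split => // d [->|->]; [exact: le_J1 | exact: le_J2].
apply: J_lub; apply: hu; by [left|right].
Qed.

Lemma J_comm x y : J x y = J y x.
Proof. apply: le_anti; apply: J_lub; by [apply: le_J2 | apply: le_J1]. Qed.

Definition M x y := x + y - J x y.

Lemma le_M1 x y : le (M x y) x.
Proof.
have := le_add (x - J x y) (le_J2 x y); apply: le_eq.
  by rewrite /M addrA (addrC y x).
by rewrite addrC subrK.
Qed.

Lemma le_M2 x y : le (M x y) y.
Proof. rewrite /M (addrC x y) J_comm; exact: le_M1. Qed.

Lemma M_glb x y z : le z x -> le z y -> le z (M x y).
Proof.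
move=> h1 h2.
have h : le (J x y) (x + y - z).
  apply: J_lub.
    have := le_add2 (le_refl x) (le_sub0 h2); apply: le_eq => //.
    by rewrite addr0. by rewrite addrA.
  have := le_add2 (le_sub0 h1) (le_refl y); apply: le_eq => //.
    by rewrite add0r. by rewrite addrAC.
have := le_add (z - J x y) h; apply: le_eq.
  by rewrite addrC subrK.
by rewrite addrA subrK.
Qed.

Lemma M_comm x y : M x y = M y x.
Proof. by rewrite /M (addrC x y) J_comm. Qed.

Lemma inf_full x y : is_inf_in mu (@fullset V) (pair x y) (M x y).
Proof.
split; first (split => // d [->|->]; [exact: le_M1 | exact: le_M2]).
move=> l [_ h]; apply: M_glb; apply: h; by [left|right].
Qed.

Lemma M_idem x : M x x = x.
Proof.
rewrite /M; have -> : J x x = x by apply: le_anti; [apply: J_lub; exact: le_refl | exact: le_J1].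
by rewrite addrK.
Qed.

Definition A x := J x (- x).

Lemma le_A x : le x (A x).
Proof. exact: le_J1. Qed.
Lemma le_Aopp x : le (- x) (A x).
Proof. exact: le_J2. Qed.

Lemma A_ge0 x : le 0 (A x).
Proof.
have h := le_add2 (le_A x) (le_Aopp x).
rewrite subrr in h.
have h2 : (0 : R) < 2^-1 by lra.
have := le_scale h h2; apply: le_eq.
  by rewrite scaler0.
rewrite scalerDr -scalerDl (_ : 2^-1 + 2^-1 = 1 :> R) ?scale1r //; lra.
Qed.

Lemma A_opp x : A (- x) = A x.
Proof. by rewrite /A opprK J_comm. Qed.

Lemma A_eq0 x : A x = 0 -> x = 0.
Proof.
move=> h; apply: le_anti.
  by rewrite -h; exact: le_A.
have := le_opp (le_Aopp x); rewrite h; apply: le_eq => //; by rewrite ?oppr0 ?opprK.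
Qed.

Definition Dj x y := M (A x) (A y) = 0.

Lemma Dj_sym x y : Dj x y -> Dj y x.
Proof. by rewrite /Dj M_comm. Qed.

Lemma Dj_opp x y : Dj x y -> Dj x (- y).
Proof. by rewrite /Dj A_opp. Qed.

Lemma L1 a b c : le 0 a -> le 0 b -> le b c -> M a c = 0 -> M a b = 0.
Proof.
move=> ha hb hbc h; apply: le_anti.
  rewrite -h; apply: M_glb; first exact: le_M1.
  exact: le_trans (le_M2 a b) hbc.
by apply: M_glb.
Qed.

Lemma L2 a b c : le 0 a -> le 0 b -> le 0 c -> M c a = 0 -> M c b = 0 ->
  M c (a + b) = 0.
Proof.
move=> ha hb hc h1 h2.
set w := M c (a + b).
have hw0 : le 0 w by apply: M_glb => //; have := le_add2 ha hb; rewrite addr0.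
have hwa : le (w - a) 0.
  rewrite -h2; apply: M_glb.
    have := le_add2 (le_M1 c (a + b)) (le_opp ha); apply: le_eq => //.
    by rewrite oppr0 addr0.
  have := le_add (- a) (le_M2 c (a + b)); apply: le_eq => //.
  by rewrite addrAC subrr add0r.
have hwa' : le w a by have := le_add a hwa; apply: le_eq; rewrite ?subrK ?add0r.
apply: le_anti => //; rewrite -h1; apply: M_glb => //; exact: le_M1.
Qed.

Lemma Tri x y : le (A (x - y)) (A x + A y).
Proof.
apply: J_lub; first exact: le_add2 (le_A x) (le_Aopp y).
have := le_add2 (le_Aopp x) (le_A y); apply: le_eq => //.
by rewrite opprB addrC.
Qed.

Lemma L3 z x w : Dj z x -> Dj z w -> Dj z (x - w).
Proof.
move=> h1 h2; rewrite /Dj; apply: (@L1 _ _ (A x + A w)); rewrite ?A_ge0 //.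
- exact: A_ge0.
- exact: A_ge0.
- exact: Tri.
- apply: L2; rewrite ?A_ge0 //; exact: A_ge0.
Qed.

Lemma Lmono z x y : Dj z y -> le (A x) (A y) -> Dj z x.
Proof. move=> h hl; apply: (L1 (A_ge0 _) (A_ge0 _) hl h). Qed.

Lemma K y w : le y w -> Dj y w -> le y 0.
Proof.
move=> h hd.
have hp : le (J y 0) (M (A y) (A w)).
  apply: M_glb; apply: J_lub.
  - exact: le_A.
  - exact: A_ge0.
  - exact: le_trans h (le_A w).
  - exact: A_ge0.
rewrite hd in hp; exact: le_trans (le_J1 y 0) hp.
Qed.

Lemma LL d b c : Dj d c -> Dj b c -> le d (b + c) -> le d b.
Proof.
move=> h1 h2 h.
have hd : Dj (d - b) c by apply: Dj_sym; apply: L3; apply: Dj_sym.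
have hle : le (d - b) c.
  have := le_add (- b) h; apply: le_eq => //; by rewrite addrAC subrr add0r.
have := K hle hd => h0; have := le_add b h0; apply: le_eq; by rewrite ?subrK ?add0r.
Qed.

Lemma LL2 d b c : Dj d c -> Dj b c -> le d (b + c) -> le 0 c.
Proof.
move=> h1 h2 h.
have hd : Dj (- c) (b - d).
  have hc : Dj c (b - d) by apply: L3; exact: Dj_sym.
  apply: Dj_sym; apply: Dj_opp; exact: Dj_sym.
have hle : le (- c) (b - d).
  have := le_add (- d - c) h; apply: le_eq.
    by rewrite addrA subrr add0r.
  by rewrite addrA addrAC addrK.
have := le_opp (K hle hd); apply: le_eq; by rewrite ?oppr0 ?opprK.
Qed.

Lemma sup_sub (S : V -> Prop) D s :
  is_sup_in mu (@fullset V) D s -> S s -> is_sup_in mu S D s.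
Proof.
move=> [[_ hu] hl] hS; split; first by split.
move=> u [_ h]; apply: hl; by split.
Qed.

Lemma inf_sub (S : V -> Prop) D s :
  is_inf_in mu (@fullset V) D s -> S s -> is_inf_in mu S D s.
Proof.
move=> [[_ hu] hl] hS; split; first by split.
move=> u [_ h]; apply: hl; by split.
Qed.

Lemma sup_S_uniq (S : V -> Prop) D s s' :
  is_sup_in mu S D s -> is_sup_in mu S D s' -> s = s'.
Proof. move=> [h1 h2] [h3 h4]; apply: le_anti; [exact: h2 | exact: h4]. Qed.

Lemma inf_S_uniq (S : V -> Prop) D s s' :
  is_inf_in mu S D s -> is_inf_in mu S D s' -> s = s'.
Proof. move=> [h1 h2] [h3 h4]; apply: le_anti; [exact: h4 | exact: h2]. Qed.

Lemma abs_S (S : V -> Prop) x a : S (A x) -> is_abs_in mu S x a -> a = A x.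
Proof. move=> hS h; apply: sup_S_uniq h (sup_sub (JP _ _) hS). Qed.

Lemma abs_S' (S : V -> Prop) x : S (A x) -> is_abs_in mu S x (A x).
Proof. move=> hS; exact: sup_sub (JP _ _) hS. Qed.

Lemma perp_Dj (S : V -> Prop) x y : S (A x) -> S (A y) -> S (M (A x) (A y)) ->
  perp_in mu S x y -> Dj x y.
Proof.
move=> hx hy hm [a [b [ha hb hi]]].
rewrite (abs_S hx ha) (abs_S hy hb) in hi.
rewrite /Dj; exact: inf_S_uniq (inf_sub (inf_full _ _) hm) hi.
Qed.

Lemma Dj_perp (S : V -> Prop) x y : S (A x) -> S (A y) -> S 0 ->
  Dj x y -> perp_in mu S x y.
Proof.
move=> hx hy h0 hd; exists (A x), (A y); split; try exact: abs_S'.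
have := @inf_sub S _ _ (inf_full (A x) (A y)); rewrite hd; exact.
Qed.

End Riesz.

Section Hom.
Variables (R : realType) (E F : lmodType R) (mu : E -> E -> R) (nu : F -> F -> R)
  (T : {linear E -> F}).
Hypotheses (HE : fuzzy_riesz mu) (HF : fuzzy_riesz nu) (HT : fuzzy_riesz_hom mu nu T).

Lemma T_J x y : T (J HE x y) = J HF (T x) (T y).
Proof. apply: sup_uniq; apply: HT; exact: JP. Qed.

Lemma T_A x : T (A HE x) = A HF (T x).
Proof. by rewrite /A T_J linearN. Qed.

Lemma T_M x y : T (M HE x y) = M HF (T x) (T y).
Proof. by rewrite /M linearB linearD T_J. Qed.

Lemma T_Dj x y : Dj HE x y -> Dj HF (T x) (T y).
Proof. by rewrite /Dj -!T_A -T_M => ->; rewrite linear0. Qed.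

End Hom.

Theorem theorem2p8 (R : realType) (E F : lmodType R)
  (mu : E -> E -> R) (nu : F -> F -> R) (T : {linear E -> F}) (B : E -> Prop) :
  fuzzy_riesz mu -> fuzzy_riesz nu -> fuzzy_riesz_hom mu nu T ->
  fuzzy_proj_band_in mu (@fullset E) B ->
  fuzzy_proj_band_in nu (img_set (T : E -> F) (@fullset E)) (img_set (T : E -> F) B).
Proof.
move=> HE HF HT [[[[_ B0 Badd Bsc] _] _] Hdec _].
set S := img_set (T : E -> F) (@fullset E).
have T_A := @T_A _ _ _ _ _ _ HE HF HT.
have T_M := @T_M _ _ _ _ _ _ HE HF HT.
have T_Dj := @T_Dj _ _ _ _ _ _ HE HF HT.
have ST : forall u, S (T u) by move=> u; exists u.
have SA : forall u, S (A HF (T u)) by move=> u; rewrite -T_A.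
have SM : forall u v, S (M HF (A HF (T u)) (A HF (T v))).
  by move=> u v; rewrite -!T_A -T_M.
have S0 : S 0 by exists 0; rewrite linear0.
have perpE : forall x y, perp_in mu (@fullset E) x y -> Dj HE x y.
  by move=> x y; apply: perp_Dj.
have dec : forall u, exists u1 u2, [/\ B u1, (forall v, B v -> Dj HF (T u2) (T v))
    & u = u1 + u2].
  move=> u; have [u1 [u2 [h1 [_ h2] ->]]] := Hdec u I.
  exists u1, u2; split => // v hv; apply: T_Dj; exact: perpE (h2 v hv).
have Dj0 : forall z, Dj HF z z -> z = 0.
  by move=> z; rewrite /Dj M_idem => /A_eq0; apply.
split.
- split.
  + split.
    * split.
      -- by move=> x [u [_ ->]].
      -- by exists 0; rewrite linear0.
      -- by move=> x y [u [hu ->]] [v [hv ->]]; exists (u + v); rewrite linearD; split => //; apply: Badd.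
      -- by move=> c x [u [hu ->]]; exists (c *: u); rewrite linearZ; split => //; apply: Bsc.
    * move=> x y a b [u [_ ->]] [v [_ ->]] ha hb hab [v' [hv' hy]].
      rewrite (abs_S (SA u) ha) (abs_S (SA v) hb) in hab.
      have [u1 [u2 [hu1 hd hu]]] := dec u; subst u.
      have h1 : Dj HF (T u2) (T u1 + T u2).
        apply: Lmono (hd v' hv') _; rewrite -hy -linearD; exact: hab.
      have h2 : Dj HF (T u2) (T u2).
        have := L3 h1 (hd u1 hu1); by rewrite addrAC subrr add0r.
      exists u1; split => //; by rewrite linearD (Dj0 _ h2) addr0.
  + move=> D s hD hs.
    have [[u [_ hsu]] _] := hs.1.
    have [u1 [u2 [hu1 hd hu]]] := dec u.
    rewrite hu linearD in hsu.
    case: (classic (exists d, D d)) => [[d hDd]|hne].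
    * have [v [hv hdv]] := hD d hDd.
      have hge : fle nu 0 (T u2).
        apply: (@LL2 _ _ _ HF d (T u1)).
        -- rewrite hdv; apply: Dj_sym; exact: hd.
        -- apply: Dj_sym; exact: hd.
        -- rewrite -hsu; exact: hs.1.2 _ hDd.
      have hub : fle nu s (T u1).
        apply: hs.2; split => // d' hd'.
        have [v2 [hv2 e2]] := hD d' hd'.
        apply: (@LL _ _ _ HF _ _ (T u2)).
        -- rewrite e2; apply: Dj_sym; exact: hd.
        -- apply: Dj_sym; exact: hd.
        -- rewrite -hsu; exact: hs.1.2 _ hd'.
      have hle : fle nu (T u2) 0.
        apply: (le_subr HF (z := T u1)); rewrite add0r addrC -hsu; exact: hub.
      have e : T u2 = 0 by exact: (le_anti HF hle hge).
      by exists u1; split => //; rewrite hsu e addr0.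
    * have h1 : fle nu s 0.
        apply: hs.2; split => // d hd'; exfalso; apply: hne; by exists d.
      have h2 : fle nu s (s + s).
        apply: hs.2; split; first by rewrite hsu -!linearD.
        move=> d hd'; exfalso; apply: hne; by exists d.
      have h3 : fle nu 0 s.
        apply: (le_subr HF (z := s)); by rewrite add0r.
      have e : s = 0 by exact: (le_anti HF h1 h3).
      by exists 0; split => //; rewrite e linear0.
- move=> x [u [_ ->]].
  have [u1 [u2 [hu1 hd ->]]] := dec u.
  exists (T u1), (T u2); split.
  + by exists u1.
  + split => // y [v [hv ->]].
    apply: Dj_perp => //; exact: hd.
  + by rewrite linearD.
- move=> x [u [hu ->]] [_ hp].
  apply: Dj0; apply: (perp_Dj (S := S)) => //.
  apply: hp; by exists u.
Qed.
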